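(* Let $X$ be a scalar random variable with samples $x$ and distribution $\pi$. Let $f:\mathbb{R}\to\mathbb{R}$ and let $Y = f(X)$, a scalar random variable with samples $y = f(x)$ and distribution $\pi_Y$, have an upper bound $u_b \in \mathbb{R}$ such that $\mathbb{P}_{\pi_Y}[Y \leq u_b] = 1$. Let $x_1,\dots,x_N$ be $N$ independent samples of $X$, set $y_k = f(x_k)$, and let $\zeta^*_N$ be the solution of $\min_{\zeta\in\mathbb{R}} \zeta$ subject to $\zeta \ge y_i$ for all $i = 1,\dots,N$ (i.e. $\zeta^*_N = \max_k f(x_k)$). Then for every $\epsilon\in[0,1]$, \[ \mathbb{P}^N_{\pi}\left[\mathbb{E}_{\pi}[f(X)] \leq \zeta^*_N(1-\epsilon) + u_b\epsilon\right] \geq 1-(1-\epsilon)^N. \]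
   Context: $\mathbb{P}^N_{\pi}$ denotes the $N$-fold product probability measure governing the i.i.d. sample $(x_1,\dots,x_N)$ drawn from $\pi$. *)

(* Defs.v *)
From HB Require Import structures.
From mathcomp Require Import all_boot all_order all_algebra.
From mathcomp Require Import all_classical all_reals all_analysis.
Set Implicit Arguments. Unset Strict Implicit. Unset Printing Implicit Defensive.
Import Order.TTheory GRing.Theory Num.Theory.
Local Open Scope classical_set_scope.
Local Open Scope ring_scope.

Definition iid_samples (d : measure_display) (Omega : measurableType d)
  (R : realType) (P : probability Omega R) (pi : probability R R)
  (N : nat) (X : nat -> Omega -> R) : Prop :=
  (forall i, (i < N)%N -> measurable_fun setT (X i)) /\
  (forall A : nat -> set R, (forall i, (i < N)%N -> measurable (A i)) ->
     P (\bigcap_(i in `I_N) (X i @^-1` A i)) = (\prod_(i < N) pi (A i))%E).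

(* zeta*_N = max_{k < N} y_k, the solution of min zeta s.t. zeta >= y_k
   (meaningful for N >= 1). *)
Definition zeta_star (R : realType) (N : nat) (y : nat -> R) : R :=
  \big[Num.max/y 0%N]_(k < N) y k.

(* Main.v *)
Require Import Defs.
From HB Require Import structures.
From mathcomp Require Import all_boot all_order all_algebra.
From mathcomp Require Import all_classical all_reals all_analysis.
From mathcomp Require Import measurable_realfun lra.
Import Order.TTheory GRing.Theory Num.Theory.
Local Open Scope classical_set_scope.
Local Open Scope ring_scope.

Section Helpers.
Local Open Scope ereal_scope.

Lemma ae_le_integralT d (T : measurableType d) (R : realType)
  (mu : {measure set T -> \bar R}) (f g : T -> \bar R) :
  measurable_fun setT f -> measurable_fun setT g ->
  {ae mu, forall x, f x <= g x} -> \int[mu]_x f x <= \int[mu]_x g x.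
Proof.
move=> mf mg fg; rewrite integralE [leRHS]integralE leeB//.
- apply: ae_ge0_le_integral => //.
  + exact: measurable_funepos.
  + exact: measurable_funepos.
  + apply: filterS fg => x fgx _.
    by apply: (@funepos_le _ _ [set x]) => //; [move=> y /[!inE] -> | rewrite inE].
- apply: ae_ge0_le_integral => //.
  + exact: measurable_funeneg.
  + exact: measurable_funeneg.
  + apply: filterS fg => x fgx _.
    by apply: (@funeneg_le _ _ [set x]) => //; [move=> y /[!inE] -> | rewrite inE].
Qed.

End Helpers.

Section Key.
Local Open Scope ereal_scope.
Context d (T : measurableType d) (R : realType) (pi : probability T R).

Lemma int_step (A : set T) (a b : R) : measurable A ->
  \int[pi]_x ((a + b * \1_A x)%R)%:E = (a + b * fine (pi A))%:E.
Proof.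
move=> mA.
under eq_integral do rewrite EFinD EFinM.
rewrite integralD//; last first.
  by apply: integrableZl => //; exact: integrable_indic.
  exact: (@finite_measure_integrable_cst _ _ _ pi setT a measurableT).
rewrite integralZl//; last exact: integrable_indic.
rewrite integral_indic// setIT integral_cst//.
have h1 : (pi : measure T R) [set: T] = 1 by exact: probability_setT.
rewrite h1.
have hA : (pi : measure T R) A = (fine (pi A))%:E by rewrite fineK// fin_num_measure.
by rewrite hA mule1 -EFinM -EFinD.
Qed.


Lemma step_bound (f : T -> R) (ub r eps t s : R) :
  measurable_fun setT f -> {ae pi, forall x, (f x <= ub)%R} ->
  \int[pi]_x (f x)%:E = r%:E -> (r <= ub)%R -> (0 <= eps)%R -> (eps < 1)%R ->
  (t * (1 - eps) = r - ub * eps)%R -> (s < t)%R ->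
  pi [set x | (f x <= s)%R] <= (1 - eps)%:E.
Proof.
move=> mf hub hint rub e0 e1 ht st.
have mA : measurable [set x | (f x <= s)%R].
  have -> : [set x | (f x <= s)%R] = f @^-1` `]-oo, s].
    by apply/seteqP; split => x /=; rewrite in_itv.
  rewrite -[X in measurable X]setTI; exact: mf.
set q := fine (pi [set x | (f x <= s)%R]).
have hq : (pi : measure T R) [set x | (f x <= s)%R] = q%:E by rewrite fineK// fin_num_measure.
have q1 : (q <= 1)%R by rewrite -lee_fin -hq; exact: probability_le1.
have q0 : (0 <= q)%R by rewrite -lee_fin -hq; exact: measure_ge0.
have hle : r%:E <= (ub + (s - ub) * q)%:E.
  rewrite -hint -int_step//; apply: ae_le_integralT.
  - by apply/measurable_EFinP; exact: mf.
  - apply/measurable_EFinP; apply: measurable_funD => //; apply: measurable_funM => //.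
  - apply: filterS hub => x fx; rewrite lee_fin indicE.
    case: (pselect (f x <= s)%R) => h.
      by rewrite mem_set//= mulr1; lra.
    by rewrite memNset//= mulr0 addr0.
rewrite lee_fin in hle.
rewrite hq lee_fin leNgt; apply/negP => hq1.
have tub : (t <= ub)%R by nra.
have h2 : ((s - ub) * q <= (s - ub) * (1 - eps))%R by nra.
clear -hle hq1 tub h2 st e1 ht; nra.
Qed.


Lemma lt_bound (f : T -> R) (ub r eps t : R) :
  measurable_fun setT f -> {ae pi, forall x, (f x <= ub)%R} ->
  \int[pi]_x (f x)%:E = r%:E -> (r <= ub)%R -> (0 <= eps)%R -> (eps < 1)%R ->
  (t * (1 - eps) = r - ub * eps)%R ->
  pi [set x | (f x < t)%R] <= (1 - eps)%:E.
Proof.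
move=> mf hub hint rub e0 e1 ht.
pose F n := [set x | (f x <= t - n.+1%:R^-1)%R].
have mF n : measurable (F n).
  have -> : F n = f @^-1` `]-oo, (t - n.+1%:R^-1)%R].
    by apply/seteqP; split => x /=; rewrite in_itv.
  rewrite -[X in measurable X]setTI; exact: mf.
have hp n : (0 < n.+1%:R^-1 :> R)%R by rewrite invr_gt0 ltr0Sn.
have UF : \bigcup_n F n = [set x | (f x < t)%R].
  apply/seteqP; split => x /=.
  - move=> [n _]; rewrite /F /= => h; have hpn := hp n.
    move: h hpn; generalize ((n.+1%:R)^-1 : R)%R => e h hpn; clear -h hpn; lra.
  - move=> h; have [k hk] := ltr_add_invr h; exists k => //=; rewrite /F /=; move: hk.
    generalize ((k.+1%:R)^-1 : R)%R => e hk; clear -hk; lra.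
have nd : nondecreasing_seq F.
  move=> m n mn; apply/subsetPset => x; rewrite /F /= => h; apply: (le_trans h).
  rewrite lerD2l lerN2 lef_pV2 ?posrE ?ltr0Sn// ler_nat ltnS//.
have mU : measurable (\bigcup_n F n) by apply: bigcupT_measurable.
have cv := @nondecreasing_cvg_mu _ _ _ pi F mF mU nd.
have : lim ((pi : measure T R) \o F @ \oo) <= (1 - eps)%:E.
  apply: lime_le; first by apply/cvg_ex; eexists; exact: cv.
  apply: nearW => n /=.
  apply: (@step_bound f ub r eps t (t - (n.+1%:R)^-1)%R mf hub hint rub e0 e1 ht).
  have hpn := hp n; move: hpn; generalize ((n.+1%:R)^-1 : R)%R => e hpn.
  clear -hpn; lra.
rewrite (cvg_lim _ cv) ?UF//.
Qed.

End Key.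

Theorem corollary1 (R : realType) (pi : probability R R) (f : R -> R)
  (ub : R) (d : measure_display) (Omega : measurableType d)
  (P : probability Omega R) (N : nat) (X : nat -> Omega -> R)
  (eps : R) :
  measurable_fun setT f ->
  pi [set x | f x <= ub] = 1%E ->
  (0 < N)%N ->
  iid_samples P pi N X ->
  0 <= eps <= 1 ->
  ((1 - (1 - eps) ^+ N)%:E <=
   P [set w | (\int[pi]_x (f x)%:E <=
               (zeta_star N (fun k => f (X k w)) * (1 - eps) + ub * eps)%:E)%E])%E.
Proof.
move=> mf hpi N0 [mX hprod] /andP[e0 e1].
have mB : measurable [set x | f x <= ub].
  have -> : [set x | f x <= ub] = f @^-1` `]-oo, ub].
    by apply/seteqP; split => x /=; rewrite in_itv.
  rewrite -[X in measurable X]setTI; exact: mf.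
have hub : {ae pi, forall x, f x <= ub}.
  exists (~` [set x | f x <= ub]); split => //.
  - exact: measurableC.
  - by rewrite probability_setC// hpi subee.
have hint : (\int[pi]_x (f x)%:E <= ub%:E)%E.
  have := @ae_le_integralT _ _ _ pi (fun x => (f x)%:E) (fun _ => ub%:E).
  have h1 : (pi : measure R R) [set: R] = 1%E by exact: probability_setT.
  rewrite integral_cst// h1 mule1; apply.
  - by apply/measurable_EFinP.
  - exact: measurable_cst.
  - by apply: filterS hub => x; rewrite lee_fin.
have pN : 0 <= (1 - eps) ^+ N by rewrite exprn_ge0// subr_ge0.
have trivT : forall E : set Omega, E = setT -> ((1 - (1 - eps) ^+ N)%:E <= P E)%E.
  move=> E ->; rewrite probability_setT lee_fin; lra.
case hm : (\int[pi]_x (f x)%:E)%E => [r| |]; rewrite hm in hint; last first.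
- by apply: trivT; apply/seteqP; split => // w _ /=; exact: leNye.
- by [].
rewrite lee_fin in hint.
case: (eqVneq eps 1) => [E1|ne1].
  apply: trivT; apply/seteqP; split => // w _ /=.
  by rewrite E1 subrr mulr0 add0r mulr1 lee_fin.
have e1' : eps < 1 by rewrite lt_neqAle ne1.
set t := (r - ub * eps) / (1 - eps).
have e1p : 0 < 1 - eps by rewrite subr_gt0.
have ht : t * (1 - eps) = r - ub * eps by rewrite /t divfK// gt_eqF.
have hle := @lt_bound _ _ _ pi f ub r eps t mf hub hm hint e0 e1' ht.
set A := [set x | f x < t].
have mA : measurable A.
  have -> : A = f @^-1` `]-oo, t[.
    by apply/seteqP; split => x /=; rewrite in_itv.
  rewrite -[X in measurable X]setTI; exact: mf.
set C := \bigcap_(i in `I_N) (X i @^-1` A).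
have mC : measurable C.
  apply: fin_bigcap_measurable; first exact: finite_II.
  move=> i /= iN; rewrite -[X in measurable X]setTI; exact: mX.
have -> : [set w | (r%:E <=
       (zeta_star N (fun k => f (X k w)) * (1 - eps) + ub * eps)%:E)%E] = ~` C.
  have hZ w : (zeta_star N (fun k => f (X k w)) < t) <->
      (forall i, (i < N)%N -> f (X i w) < t).
    rewrite /zeta_star; split.
    - by move/bigmax_ltP => [_ h] i iN; exact: (h (Ordinal iN)).
    - by move=> h; apply/bigmax_ltP; split; [exact: h | move=> i _; exact: h].
  apply/seteqP; split => w /=.
  - rewrite lee_fin => hr HC.
    have : zeta_star N (fun k => f (X k w)) < t by apply/hZ => i iN; exact: (HC i iN).
    move: hr; move: (zeta_star N (fun k => f (X k w))) => z hr hz.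
    clear -hr hz ht e1p; nra.
  - move=> hnC; rewrite lee_fin.
    have : t <= zeta_star N (fun k => f (X k w)).
      rewrite leNgt; apply/negP => /hZ h; apply: hnC => i iN; exact: h.
    move: (zeta_star N (fun k => f (X k w))) => z hz.
    clear -hz ht e1p; nra.
rewrite probability_setC// hprod; last by move=> i _.
set p := fine (pi A).
have hp : pi A = p%:E by rewrite fineK// fin_num_measure.
rewrite hp prodEFin prodr_const card_ord -EFinB.
rewrite lee_fin.
have hpe : p <= 1 - eps by rewrite -lee_fin -hp.
have p0 : 0 <= p by rewrite fine_ge0// measure_ge0.
have : p ^+ N <= (1 - eps) ^+ N by apply: lerXn2r; rewrite ?nnegrE ?subr_ge0.
move: (p ^+ N) ((1 - eps) ^+ N) => a b; lra.
Qed.
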